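(* Let $\mathbb{C}$ be a locally small category in which all morphisms are monomorphisms, and let $A\in\mathrm{Ob}(\mathbb{C})$. Then $t_{\mathbb{C}}(A)$ is finite if and only if both $t^\sim_{\mathbb{C}}(A)$ and $\mathrm{Aut}(A)$ are finite, and in that case $t_{\mathbb{C}}(A)=|\mathrm{Aut}(A)|\cdot t^\sim_{\mathbb{C}}(A)$.
   Context: For $k\ge2$, $t\ge1$ and objects $A,B,C$: $C\to(B)^A_{k,t}$ means that for every $\chi:\hom(A,C)\to\{0,\dots,k-1\}$ there is $w\in\hom(B,C)$ with $|\chi(w\cdot\hom(A,B))|\le t$ (where $w\cdot X=\{w\cdot x:x\in X\}$). $t_{\mathbb{C}}(A)$ is the least positive integer $n$ such that for all $k\ge2$ and all $B\in\mathrm{Ob}(\mathbb{C})$ there is $C\in\mathrm{Ob}(\mathbb{C})$ with $C\to(B)^A_{k,n}$; $t_{\mathbb{C}}(A)=\infty$ if no such $n$ exists. For $f,f'\in\hom(A,B)$ let $f\sim_A f'$ iff $f'=f\cdot\alpha$ for some $\alpha\in\mathrm{Aut}(A)$, and $\binom{B}{A}=\hom(A,B)/{\sim_A}$; for $w\in\hom(B,C)$, $w\cdot(f/{\sim_A})=(w\cdot f)/{\sim_A}$. $C\overset{\sim}{\to}(B)^A_{k,t}$ means that for every $\chi:\binom{C}{A}\to\{0,\dots,k-1\}$ there is $w\in\hom(B,C)$ with $|\chi(w\cdot\binom{B}{A})|\le t$. $t^\sim_{\mathbb{C}}(A)$ is the least positive integer $n$ such that for all $k\ge2$ and all $B$ there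 is $C$ with $C\overset{\sim}{\to}(B)^A_{k,n}$, and $\infty$ otherwise. *)

(* Defs.v *)
From mathcomp Require Import all_boot.
From mathcomp Require Import boolp.

Set Implicit Arguments.
Unset Strict Implicit.
Unset Printing Implicit Defensive.

Record category := Category {
  Ob : Type;
  Hom : Ob -> Ob -> Type;
  comp : forall A B C : Ob, Hom B C -> Hom A B -> Hom A C;
  idm : forall A : Ob, Hom A A;
  compA : forall (A B C D : Ob) (h : Hom C D) (g : Hom B C) (f : Hom A B),
      comp h (comp g f) = comp (comp h g) f;
  comp1m : forall (A B : Ob) (f : Hom A B), comp (idm B) f = f;
  compm1 : forall (A B : Ob) (f : Hom A B), comp f (idm A) = f
}.

Arguments comp {c A B C}.
Arguments idm {c}.
Arguments Hom : clear implicits.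
Arguments Ob : clear implicits.

Section Defs.
Variable CC : category.

Definition all_mono : Prop :=
  forall (X Y Z : Ob CC) (w : Hom CC Y Z) (f g : Hom CC X Y), comp w f = comp w g -> f = g.

Definition is_iso (A : Ob CC) (a : Hom CC A A) : Prop :=
  exists b : Hom CC A A, comp a b = idm A /\ comp b a = idm A.
Definition Aut (A : Ob CC) := { a : Hom CC A A | is_iso a }.

Definition has_card (T : Type) (n : nat) : Prop :=
  exists f : 'I_n -> T, bijective f.

Definition arrows (A B C : Ob CC) (k t : nat) : Prop :=
  forall chi : Hom CC A C -> 'I_k,
    exists w : Hom CC B C,
      #|[set i : 'I_k | `[< exists f : Hom CC A B, chi (comp w f) = i >]]| <= t.

Definition simA (A X : Ob CC) (f f' : Hom CC A X) : Prop :=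
  exists alpha : Aut A, f' = comp f (proj1_sig alpha).

(* binom(X, A) = Hom(A, X) / ~_A, as the set of equivalence classes *)
Definition binom (A X : Ob CC) :=
  { P : Hom CC A X -> Prop | exists f : Hom CC A X, P = simA f }.
Definition cls (A X : Ob CC) (f : Hom CC A X) : binom A X :=
  exist _ (simA f) (ex_intro _ f erefl).

(* C ~> (B)^A_{k,t}; note w . (f/~) = (w . f)/~ *)
Definition arrows_sim (A B C : Ob CC) (k t : nat) : Prop :=
  forall chi : binom A C -> 'I_k,
    exists w : Hom CC B C,
      #|[set i : 'I_k | `[< exists f : Hom CC A B, chi (cls (comp w f)) = i >]]| <= t.

(* least positive n with P n, None (= infinity) if none exists *)
Definition least_pos (P : nat -> Prop) : option nat :=
  match pselect (exists n, `[< (0 < n) /\ P n >]) with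
  | left h => Some (ex_minn h)
  | right _ => None
  end.

Definition tC (A : Ob CC) : option nat :=
  least_pos (fun n => forall k, 2 <= k -> forall B : Ob CC, exists C : Ob CC, arrows A B C k n).

Definition tC_sim (A : Ob CC) : option nat :=
  least_pos (fun n => forall k, 2 <= k -> forall B : Ob CC, exists C : Ob CC, arrows_sim A B C k n).

End Defs.

(* Main.v *)
From Stdlib Require Import Classical.
Require Import Defs.
From mathcomp Require Import all_boot.
From mathcomp Require Import boolp.

Set Implicit Arguments.
Unset Strict Implicit.
Unset Printing Implicit Defensive.

Section S.
Variable CC : category.
Variable A : Ob CC.

Lemma sig_eq' (T : Type) (P : T -> Prop) (x y : sig P) :
  proj1_sig x = proj1_sig y -> x = y.
Proof. case: x => x px; case: y => y py /= E; subst y. by rewrite (Prop_irrelevance px py). Qed.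

Lemma aut_eq (x y : Aut A) : proj1_sig x = proj1_sig y -> x = y.
Proof. exact: sig_eq'. Qed.

Definition aut1 : Aut A :=
  exist _ (idm A) (ex_intro _ (idm A) (conj (Defs.comp1m _) (Defs.comp1m _))).

Lemma isoM (x y : Aut A) : is_iso (Defs.comp (proj1_sig x) (proj1_sig y)).
Proof.
case: x => x [x' [h1 h2]]; case: y => y [y' [h3 h4]] /=.
exists (Defs.comp y' x'); split.
- by rewrite -Defs.compA (Defs.compA y) h3 Defs.comp1m.
- by rewrite -Defs.compA (Defs.compA x') h2 Defs.comp1m.
Qed.

Definition autM (x y : Aut A) : Aut A := exist _ _ (isoM x y).

Lemma isoV (x : Aut A) : exists y : Aut A,
  Defs.comp (proj1_sig x) (proj1_sig y) = idm A /\ Defs.comp (proj1_sig y) (proj1_sig x) = idm A.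
Proof.
case: x => x [x' [h1 h2]] /=.
have ix' : is_iso x' by exists x.
by exists (exist _ x' ix').
Qed.

Definition autV (x : Aut A) : Aut A := proj1_sig (cid (isoV x)).
Lemma autVP x : Defs.comp (proj1_sig x) (proj1_sig (autV x)) = idm A /\
   Defs.comp (proj1_sig (autV x)) (proj1_sig x) = idm A.
Proof. exact: (proj2_sig (cid (isoV x))). Qed.

Definition rep X (c : binom A X) : Hom CC A X := proj1_sig (cid (proj2_sig c)).
Lemma repP X (c : binom A X) : proj1_sig c = simA (rep c).
Proof. exact: (proj2_sig (cid (proj2_sig c))). Qed.

Lemma simA_refl X (f : Hom CC A X) : simA f f.
Proof. by exists aut1; rewrite /= Defs.compm1. Qed.

Lemma simA_eq X (f g : Hom CC A X) : simA f g -> simA f = simA g.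
Proof.
case=> a Ea; apply: funext => h; apply: propext; split.
- case=> b ->; exists (autM (autV a) b); rewrite Ea /= -Defs.compA (Defs.compA (proj1_sig a)).
  by rewrite (proj1 (autVP a)) Defs.comp1m.
- case=> b ->; exists (autM a b); by rewrite Ea /= Defs.compA.
Qed.

Lemma cls_eq X (f g : Hom CC A X) : simA f g -> cls f = cls g.
Proof. by move=> /simA_eq E; apply: sig_eq'. Qed.

Lemma posE X (h : Hom CC A X) : exists a : Aut A, h = Defs.comp (rep (cls h)) (proj1_sig a).
Proof.
have E := repP (cls h); simpl in E.
have : simA h h by apply: simA_refl.
by rewrite E.
Qed.

Definition pos X (h : Hom CC A X) : Aut A := proj1_sig (cid (posE h)).
Lemma posP X (h : Hom CC A X) : h = Defs.comp (rep (cls h)) (proj1_sig (pos h)).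
Proof. exact: (proj2_sig (cid (posE h))). Qed.

Lemma cls_compA X (h : Hom CC A X) (a : Aut A) : cls (Defs.comp h (proj1_sig a)) = cls h.
Proof. by symmetry; apply: cls_eq; exists a. Qed.

Lemma pos_comp (mono : all_mono CC) X (h : Hom CC A X) (a : Aut A) :
  pos (Defs.comp h (proj1_sig a)) = autM (pos h) a.
Proof.
apply: aut_eq; apply: (mono _ _ _ (rep (cls h))) => /=.
rewrite -[in LHS](cls_compA h a) -posP.
by rewrite Defs.compA -posP.
Qed.

Lemma encdec (T : finType) K : #|T| = K -> exists (enc : T -> 'I_K) (dec : 'I_K -> T),
  cancel enc dec /\ cancel dec enc.
Proof.
move=> E; exists (fun x => cast_ord E (enum_rank x)),
  (fun i => enum_val (cast_ord (esym E) i)); split => x.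
- by rewrite cast_ordK enum_rankK.
- by rewrite enum_valK cast_ordKV.
Qed.

Definition Pt n := forall k, 2 <= k -> forall B : Ob CC, exists C : Ob CC, arrows A B C k n.
Definition Ps n := forall k, 2 <= k -> forall B : Ob CC, exists C : Ob CC, arrows_sim A B C k n.

Lemma Pt_Ps n : Pt n -> Ps n.
Proof.
move=> H k k2 B; case: (H k k2 B) => C HC; exists C => chi.
exact: (HC (fun f => chi (cls f))).
Qed.

Lemma upper a m (fa : 'I_a -> Aut A) (ga : Aut A -> 'I_a) :
  cancel ga fa -> Ps m -> Pt (m * a).
Proof.
move=> gK Hs k k2 B.
have a0 : 0 < a by case: (ga aut1) => i /=; case: a {fa ga gK} => //.
have cT : #|{ffun 'I_a -> 'I_k}| = k ^ a by rewrite card_ffun !card_ord.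
case: (encdec cT) => enc [dec [encK decK]].
have ka : 2 <= k ^ a.
  have k0 : 0 < k by apply: leq_trans k2.
  apply: leq_trans k2 _; rewrite -{1}(expn1 k); exact: leq_pexp2l.
case: (Hs _ ka B) => C HC; exists C => chi.
pose chi' (c : binom A C) := enc [ffun p => chi (Defs.comp (rep c) (proj1_sig (fa p)))].
case: (HC chi') => w Hw; exists w.
set S' := [set i | _] in Hw.
apply: leq_trans (_ : #|(fun x : 'I_(k ^ a) * 'I_a => dec x.1 x.2) @: setX S' setT| <= _).
  apply: subset_leq_card; apply/subsetP => i; rewrite inE => /asboolP [f <-].
  apply/imsetP; exists (chi' (cls (Defs.comp w f)), ga (pos (Defs.comp w f))).
    rewrite in_setX in_setT andbT inE; apply/asboolP; by exists f.
  by rewrite /= /chi' encK ffunE gK -posP.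
apply: leq_trans (leq_imset_card _ _) _.
by rewrite cardsX cardsT card_ord leq_mul.
Qed.

Lemma zero_case C : ~ arrows_sim A A C 2 0.
Proof.
move=> H; case: (H (fun _ => ord0)) => w; rewrite leqn0 => /eqP/cards0_eq E.
have : (ord0 : 'I_2) \in [set i : 'I_2 | `[< exists f : Hom CC A A, ord0 = i >]].
  by rewrite inE; apply/asboolP; exists (idm A).
by rewrite E inE.
Qed.

Lemma lower (mono : all_mono CC) j (e : 'I_j.+1 -> Aut A) : injective e ->
  forall k0 B M, 2 <= k0 -> (forall C, ~ arrows_sim A B C k0 M) ->
  forall n, Pt n -> M.+1 * j.+1 <= n.
Proof.
move=> einj k0 B M k2 HB n Pn.
have cT : #|{: 'I_k0 * 'I_j.+1}| = k0 * j.+1 by rewrite card_prod !card_ord.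
case: (encdec cT) => enc [dec [encK decK]].
have K2 : 2 <= k0 * j.+1 by apply: leq_trans k2 (leq_pmulr _ _).
case: (Pn _ K2 B) => C HC.
have [chi' Hchi'] := not_all_ex_not _ _ (HB C).
pose pidx (h : Hom CC A C) : 'I_j.+1 :=
  match pselect (exists i, e i = pos h) with
  | left H => proj1_sig (cid H) | right _ => ord0 end.
have pidxE i h : e i = pos h -> pidx h = i.
  move=> Ei; rewrite /pidx; case: pselect => [H|H]; last by case: H; exists i.
  by apply: einj; rewrite (proj2_sig (cid H)).
pose chi (f : Hom CC A C) := enc (chi' (cls f), pidx f).
case: (HC chi) => w Hw.
set S' := [set i | `[< exists f : Hom CC A B, chi' (cls (Defs.comp w f)) = i >]].
have HS' : M < #|S'|.
  by rewrite ltnNge; apply/negP => H; apply: Hchi'; exists w.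
apply: leq_trans Hw.
apply: leq_trans (_ : #|enc @: setX S' setT| <= _); last first.
  apply: subset_leq_card; apply/subsetP => _ /imsetP [[c i] Hci ->].
  move: Hci; rewrite in_setX => /andP [Hc _].
  rewrite inE in Hc; case/asboolP: Hc => f Hf.
  rewrite inE; apply/asboolP.
  exists (Defs.comp f (proj1_sig (autM (autV (pos (Defs.comp w f))) (e i)))).
  rewrite /chi Defs.compA cls_compA Hf; congr (enc (_, _)).
  apply: pidxE; rewrite pos_comp //; apply: aut_eq => /=.
  by rewrite Defs.compA (proj1 (autVP _)) Defs.comp1m.
rewrite card_imset; last exact: can_inj encK.
by rewrite cardsX cardsT card_ord leq_mul.
Qed.

Lemma least_posP (P : nat -> Prop) n : least_pos P = Some n ->
  [/\ 0 < n, P n & forall n', 0 < n' -> P n' -> n <= n'].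
Proof.
rewrite /least_pos; case: pselect => // h [<-].
case: ex_minnP => m /asboolP [m0 Pm] Hmin; split => // n' n0 Pn.
by apply: Hmin; apply/asboolP; split.
Qed.

Lemma least_pos_some (P : nat -> Prop) n : 0 < n -> P n -> exists m, least_pos P = Some m.
Proof.
move=> n0 Pn; rewrite /least_pos; case: pselect => [h|h]; first by eexists.
by exfalso; apply: h; exists n; apply/asboolP.
Qed.

Lemma aut_fin N : (forall j (e : 'I_j.+1 -> Aut A), injective e -> j.+1 <= N) ->
  exists a, has_card (Aut A) a.
Proof.
move=> HN.
pose Q := fun j => `[< exists e : 'I_j -> Aut A, injective e >].
have Q0 : exists j, Q j by exists 0; apply/asboolP; exists (fun _ => aut1); by case.
have QN : forall j, Q j -> j <= N.
  case=> // j /asboolP [e ei]; exact: HN ei.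
case: (ex_maxnP Q0 QN) => i /asboolP [e ei] Hmax.
have surj : forall x, exists p, e p = x.
  move=> x; apply: NNPP => Hx.
  pose e' (p : 'I_i.+1) := if unlift ord_max p is Some q then e q else x.
  have e'i : injective e'.
    move=> p1 p2; rewrite /e'.
    case: unliftP => [q1 ->|->]; case: unliftP => [q2 ->|->] // H.
    - by rewrite (ei _ _ H).
    - by case: Hx; exists q1.
    - by case: Hx; exists q2.
  have : Q i.+1 by apply/asboolP; exists e'.
  by move/Hmax; rewrite ltnn.
exists i, e.
exists (fun x => proj1_sig (cid (surj x))) => [p|x].
- by apply: ei; rewrite (proj2_sig (cid (surj (e p)))).
- exact: (proj2_sig (cid (surj x))).
Qed.

Lemma lowerM (mono : all_mono CC) n m : tC A = Some n -> tC_sim A = Some m ->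
  forall j (e : 'I_j.+1 -> Aut A), injective e -> m * j.+1 <= n.
Proof.
move=> /least_posP [n0 Pn _] /least_posP [m0 Pm Hm] j e ei.
case: m m0 Pm Hm => // -[|M] _ Pm Hm.
  exact: (lower mono ei (B := A) (k0 := 2) (M := 0) (leqnn _) (@zero_case) Pn).
have nP : ~ Ps M.+1 by move=> H; have := Hm _ (ltn0Sn _) H; rewrite ltnn.
have [k Hk] := not_all_ex_not _ _ nP.
have [k2 Hk'] := imply_to_and _ _ Hk.
have [B HB] := not_all_ex_not _ _ Hk'.
have HB' := not_ex_all_not _ _ HB.
exact: (lower mono ei k2 HB' Pn).
Qed.

End S.

Theorem proposition3p1 (CC : category) (A : Ob CC) :
  all_mono CC ->
  ((exists n, tC A = Some n) <->
     ((exists m, tC_sim A = Some m) /\ (exists a, has_card (Aut A) a)))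
  /\
  (forall n m a, tC A = Some n -> tC_sim A = Some m -> has_card (Aut A) a ->
     n = a * m).
Proof.
move=> mono; split; first split.
- case=> n Hn; have [n0 Pn _] := least_posP Hn.
  have [m Hm] := least_pos_some n0 (Pt_Ps Pn).
  split; first by exists m.
  apply: (aut_fin (N := n)) => j e ei.
  have [m0 _ _] := least_posP Hm.
  apply: leq_trans (lowerM mono Hn Hm ei); exact: leq_pmull.
- case=> [[m Hm] [a [fa [ga fK gK]]]].
  have [m0 Pm _] := least_posP Hm.
  have a0 : 0 < a by case: (ga (aut1 A)) => i /=; case: a {fa ga fK gK} => //.
  apply: (least_pos_some (n := m * a)); last exact: upper gK Pm.
  by rewrite muln_gt0 m0 a0.
- move=> n m a Hn Hm [fa [ga fK gK]].
  have [n0 Pn Hmin] := least_posP Hn.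
  have [m0 Pm _] := least_posP Hm.
  have a0 : 0 < a by case: (ga (aut1 A)) => i /=; case: a {fa ga fK gK} => //.
  apply/eqP; rewrite eqn_leq mulnC; apply/andP; split.
    apply: Hmin; [by rewrite muln_gt0 m0 a0 | exact: upper gK Pm].
  case: a a0 fa ga fK gK => // a _ fa ga fK gK.
  by have := lowerM mono Hn Hm (can_inj fK).
Qed.
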